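(* Let $S$, $S'$ be Polish spaces, $(X_n)$, $(Y_n)$ sequences of $S$-valued random variables, and $g_n:S\to S'$ continuous functions. If $X_n//Y_n\to1$, then $g_n(X_n)//g_n(Y_n)\to1$.
   Context: For a random variable $X$, $\mathbb{P}_X$ denotes its law. Write $X_n//Y_n\to1$ if for each $n$, $\mathbb{P}_{X_n}$ is absolutely continuous with respect to $\mathbb{P}_{Y_n}$ with a density $f_n\ge0$ ($\mathbb{P}_{X_n}=f_n\mathbb{P}_{Y_n}$), and for every $\varepsilon>0$, $\mathbb{P}_{Y_n}(\{x:|f_n(x)-1|<\varepsilon\})\to1$ as $n\to\infty$. *)

(* Defs.v *)
From HB Require Import structures.
From mathcomp Require Import all_boot all_order all_algebra.
From mathcomp Require Import all_classical all_reals all_analysis.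
Set Implicit Arguments. Unset Strict Implicit. Unset Printing Implicit Defensive.
Import Order.TTheory GRing.Theory Num.Theory.
Import numFieldNormedType.Exports.
Local Open Scope classical_set_scope.
Local Open Scope ring_scope.

Definition borel (T : ptopologicalType) := g_sigma_algebraType (@open T).

Definition polish (R : realType) (T : topologicalType) : Prop :=
  exists d : T -> T -> R,
    [/\ (forall x y, 0 <= d x y),
        (forall x y, d x y = 0 <-> x = y),
        (forall x y, d x y = d y x),
        (forall x y z, d x z <= d x y + d y z) &
        (forall A : set T, open A <->
           (forall x, A x -> exists2 e : R, 0 < e & [set y | d x y < e] `<=` A))]
    /\ (forall u : nat -> T,
          (forall e : R, 0 < e -> exists N, forall m n,
             (N <= m)%N -> (N <= n)%N -> d (u m) (u n) < e) ->
          exists x : T, u @ \oo --> x)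
    /\ (exists D : set T, countable D /\ closure D = setT).

Definition law d d' (O : measurableType d) (T : measurableType d') (R : realType)
  (P : probability O R) (X : O -> T) : set T -> \bar R := pushforward P X.

Definition has_density d (T : measurableType d) (R : realType)
  (mu nu : set T -> \bar R) (f : T -> R) : Prop :=
  [/\ (forall x, 0 <= f x), measurable_fun setT f &
      forall A, measurable A -> mu A = (\int[nu]_(x in A) (f x)%:E)%E].

(* X_n // Y_n -> 1, stated on the laws mu n = P_{X_n}, nu n = P_{Y_n}. *)
Definition ratio_to_one d (T : measurableType d) (R : realType)
  (mu nu : nat -> set T -> \bar R) : Prop :=
  exists f : nat -> T -> R,
    (forall n, has_density (mu n) (nu n) (f n)) /\
    (forall eps : R, 0 < eps ->
       (fun n => nu n [set x | `|f n x - 1| < eps]) @ \oo --> 1%E).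

(* Main.v *)
Require Import Defs.
From HB Require Import structures.
From mathcomp Require Import all_boot all_order all_algebra.
From mathcomp Require Import all_classical all_reals all_analysis.
From mathcomp Require Import lra.
Import Order.TTheory GRing.Theory Num.Theory.
Local Open Scope classical_set_scope.
Local Open Scope ring_scope.

Section mkmf.
Context d d' (T1 : measurableType d) (T2 : measurableType d')
  (f : T1 -> T2) (mf : measurable_fun setT f).
Definition mkmf : T1 -> T2 := let _ := mf in f.
HB.instance Definition _ := isMeasurableFun.Build _ _ _ _ mkmf mf.
End mkmf.

Lemma cont_borel (S S' : ptopologicalType) (g : S -> S') :
  continuous g -> measurable_fun setT (g : borel S -> borel S').
Proof.
move=> cg.
have H := @measurability _ _ (borel S) (borel S') setT g (@open S').
apply: H; first by [].
move=> _ [B oB <-]; apply: sub_sigma_algebra; rewrite setTI.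
by move: oB; apply: (proj1 (continuousP g)).
Qed.

Section gen.
Context {d} {T : measurableType d} {R : realType}.

Lemma meas_lt {k : T -> R} c : measurable_fun setT k ->
  measurable [set x | k x < c].
Proof.
move=> mk; have := mk measurableT _ (measurable_itv `]-oo, c[); rewrite setTI.
congr measurable; apply/seteqP; split => x /=; rewrite in_itv /=; by [].
Qed.

Lemma meas_le {k : T -> R} c : measurable_fun setT k ->
  measurable [set x | k x <= c].
Proof.
move=> mk; have := mk measurableT _ (measurable_itv `]-oo, c]); rewrite setTI.
congr measurable; apply/seteqP; split => x /=; rewrite in_itv /=; by [].
Qed.

Lemma meas_ge {k : T -> R} c : measurable_fun setT k ->
  measurable [set x | c <= k x].
Proof.
move=> mk; have := mk measurableT _ (measurable_itv `[c, +oo[); rewrite setTI.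
congr measurable; apply/seteqP; split => x /=; rewrite in_itv /= ?andbT; by [].
Qed.

Variable P : probability T R.

Lemma pfin {A} : measurable A -> P A \is a fin_num.
Proof.
move=> mA; rewrite ge0_fin_numE ?measure_ge0 //.
by apply: (le_lt_trans (probability_le1 P mA)); rewrite ltey.
Qed.

Lemma pE {A} : measurable A -> P A = (fine (P A))%:E.
Proof.
move=> mA; rewrite fineK // ge0_fin_numE ?measure_ge0 //.
by apply: (le_lt_trans (probability_le1 P mA)); rewrite ltey.
Qed.

Lemma p01 {A} : measurable A -> 0 <= fine (P A) <= 1.
Proof.
move=> mA; rewrite -!lee_fin -pE // measure_ge0 /=.
exact: probability_le1.
Qed.

Lemma pmono {A B} : measurable A -> measurable B -> A `<=` B ->
  fine (P A) <= fine (P B).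
Proof.
move=> mA mB AB; rewrite -lee_fin -!pE //; by apply: le_measure => //; rewrite inE.
Qed.

Lemma pC {A} : measurable A -> fine (P (~` A)) = 1 - fine (P A).
Proof.
move=> mA; apply/EFin_inj; rewrite -pE; last exact: measurableC.
by rewrite probability_setC // EFinB -pE.
Qed.

Lemma pU {A B} : measurable A -> measurable B ->
  fine (P (A `|` B)) <= fine (P A) + fine (P B).
Proof.
move=> mA mB; rewrite -lee_fin EFinD -!pE //; last exact: measurableU.
exact: measureU2.
Qed.

Lemma pT : fine (P setT) = 1.
Proof. by rewrite probability_setT. Qed.

End gen.

Lemma fin_arith {R : realType} {e D v b c vb vbc : R} : 0 < e ->
  e * b <= D -> e * c <= D -> 1 <= vbc -> vbc <= vb + c -> vb <= v + b ->
  e * (1 - v) <= 2 * D.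
Proof. move=> *; nra. Qed.

Lemma fin_arith2 {R : realType} {e η s v : R} : 0 < e -> 0 < η ->
  e * (1 - v) <= 2 * (e * η / 8 + (1 - s)) -> `|1 - s| < e * η / 8 ->
  v <= 1 -> `|1 - v| < η.
Proof.
move=> e0 h0 H1 H2 v1.
have H3 : 1 - s < e * η / 8 by apply: le_lt_trans H2; apply: ler_norm.
rewrite ger0_norm; last lra.
nra.
Qed.

Section core.
Context {d d'} (T : measurableType d) (T' : measurableType d') (R : realType)
  (mu nu : probability T R) (f : T -> R) (hf : has_density mu nu f)
  (G : T -> T') (mG : measurable_fun setT G).

Let G' := @mkmf _ _ _ _ G mG.
Definition mu' := distribution mu G'.
Definition nu' := distribution nu G'.

Lemma pre_meas {A} : measurable A -> measurable (G @^-1` A).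
Proof. by move=> mA; have := mG measurableT _ mA; rewrite setTI. Qed.

Lemma f_ge0 x : 0 <= f x. Proof. by case: hf. Qed.
Lemma f_meas : measurable_fun setT f. Proof. by case: hf. Qed.
Lemma fE {A} : measurable A -> mu A = (\int[nu]_(x in A) (f x)%:E)%E.
Proof. by case: hf => _ _; apply. Qed.

Lemma dom' : mu' `<< nu'.
Proof.
move=> N nN A mA AN; have nuA0 := nN A mA AN; rewrite /mu' /distribution /pushforward /=.
rewrite (fE (pre_meas mA)); apply: null_set_integral => //.
  exact: pre_meas.
apply/measurable_realfun.measurable_EFinP; apply: measurable_funTS; exact: f_meas.
Qed.

Definition hh y := fine (Radon_Nikodym_SigmaFinite.f mu' nu' y).

Lemma hh_dens : has_density mu' nu' hh.
Proof.
split.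
- by move=> y; apply: fine_ge0; apply: Radon_Nikodym_SigmaFinite.f_ge0; exact: dom'.
- have mRN := measurable_int nu' (Radon_Nikodym_SigmaFinite.f_integrable dom').
  apply/measurable_realfun.measurable_EFinP.
  apply: eq_measurable_fun mRN => y _ /=; rewrite /hh fineK //.
  apply: Radon_Nikodym_SigmaFinite.f_fin_num; exact: dom'.
- move=> A mA.
  have -> : mu' A = (\int[nu']_(x in A) Radon_Nikodym_SigmaFinite.f mu' nu' x)%E
    := Radon_Nikodym_SigmaFinite.f_integral dom' mA.
  apply: eq_integral => y _; rewrite /hh fineK //.
  apply: Radon_Nikodym_SigmaFinite.f_fin_num; exact: dom'.
Qed.

Definition U (δ : R) := [set x | `|f x - 1| < δ].

Lemma measU δ : measurable (U δ).
Proof.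
apply: meas_lt.
have := measurableT_comp (@measurable_realfun.normr_measurable R setT)
  (measurable_realfun.measurable_funB f_meas (measurable_cst (1:R))).
by [].
Qed.

Lemma boundT A δ : measurable A -> 0 < δ ->
  fine (nu A) <= fine (mu A) + δ + (1 - fine (nu (U δ))).
Proof.
move=> mA d0.
set E := ~` U δ.
have mE : measurable E := measurableC (measU δ).
have mI : measurable_fun setT (\1_E : T -> R) by apply: measurable_realfun.measurable_indic.
have mf := f_meas.
have e1 : (\int[nu]_(x in A) ((δ + \1_E x)%:E) = δ%:E * nu A + nu (E `&` A))%E.
  under eq_integral do rewrite EFinD.
  rewrite ge0_integralD //; first by rewrite integral_cst // integral_indic.
  all: try (by move=> x _; rewrite lee_fin ?ltW).
  all: try (by apply/measurable_realfun.measurable_EFinP; exact: measurable_funTS).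
have e2 : (\int[nu]_(x in A) ((f x)%:E + (δ + \1_E x)%:E) =
    \int[nu]_(x in A) (f x)%:E + \int[nu]_(x in A) (δ + \1_E x)%:E)%E.
  rewrite ge0_integralD //.
  - by move=> x _; rewrite lee_fin f_ge0.
  - apply/measurable_realfun.measurable_EFinP; exact: measurable_funTS.
  - by move=> x _; rewrite lee_fin addr_ge0 // ltW.
  - apply/measurable_realfun.measurable_EFinP; apply: measurable_funTS.
    by apply: measurable_realfun.measurable_funD.
have key : (nu A <= mu A + (δ%:E * nu A + nu (E `&` A)))%E.
  rewrite (fE mA) -e1 -e2.
  have -> : nu A = (\int[nu]_(x in A) (cst 1%E x))%E by rewrite integral_cst // mul1e.
  apply: ge0_le_integral => //.
  - apply/measurable_realfun.measurable_EFinP; apply: measurable_funTS.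
    by apply: measurable_realfun.measurable_funD => //; apply: measurable_realfun.measurable_funD.
  - move=> x _; rewrite -EFinD lee_fin indicE.
    have f0 := f_ge0 x.
    case: (pselect (U δ x)) => Ux.
    + rewrite /E in_setC mem_set //= addr0.
      move: Ux; rewrite /U /= ltr_norml => /andP[h1 h2]; lra.
    + rewrite /E in_setC memNset //=; lra.
have mEA : measurable (E `&` A) by apply: measurableI.
rewrite (pE nu mA) (pE mu mA) (pE nu mEA) -!EFinM -!EFinD lee_fin in key.
have hA := p01 nu mA.
have hEA := pmono nu mEA mE (@subIsetl _ _ _).
rewrite pC in hEA; last exact: measU.
nra.
Qed.

Lemma boundT2 A δ : measurable A -> 0 < δ ->
  fine (mu A) <= fine (nu A) + δ + (1 - fine (nu (U δ))).
Proof.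
move=> mA d0; have := boundT _ _ (measurableC mA) d0.
rewrite !pC //; lra.
Qed.

Lemma hh_meas : measurable_fun setT hh. Proof. by case: hh_dens. Qed.
Lemma hh_ge0 y : 0 <= hh y. Proof. by case: hh_dens. Qed.
Lemma hhE A : measurable A -> mu' A = (\int[nu']_(y in A) (hh y)%:E)%E.
Proof. by case: hh_dens => _ _; apply. Qed.

Lemma boundT' eps δ : 0 < eps -> 0 < δ ->
  eps * (1 - fine (nu' [set y | `|hh y - 1| < eps])) <=
  2 * (δ + (1 - fine (nu (U δ)))).
Proof.
move=> e0 d0.
have mh := hh_meas.
set B := [set y | 1 + eps <= hh y].
set C := [set y | hh y <= 1 - eps].
set V := [set y | `|hh y - 1| < eps].
have mB : measurable B by apply: meas_ge.
have mC : measurable C by apply: meas_le.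
have mV : measurable V.
  apply: meas_lt.
  have := measurableT_comp (@measurable_realfun.normr_measurable R setT)
    (measurable_realfun.measurable_funB mh (measurable_cst (1:R))).
  by [].
have hB : eps * fine (nu' B) <= δ + (1 - fine (nu (U δ))).
  have i1 : ((1 + eps)%:E * nu' B <= mu' B)%E.
    rewrite (hhE _ mB) -integral_cst //.
    apply: ge0_le_integral => //.
    all: try (by move=> y _; rewrite lee_fin; lra).
    all: try (by move=> y By; rewrite lee_fin).
    all: try (by apply/measurable_realfun.measurable_EFinP; exact: measurable_funTS).
  have h2 : fine (mu' B) <= fine (nu' B) + δ + (1 - fine (nu (U δ))) := boundT2 _ _ (pre_meas mB) d0.
  have i1' : (1 + eps) * fine (nu' B) <= fine (mu' B).
    by rewrite -lee_fin EFinM -(pE nu' mB) -(pE mu' mB).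
  nra.
have hC : eps * fine (nu' C) <= δ + (1 - fine (nu (U δ))).
  have i2 : (mu' C <= (1 - eps)%:E * nu' C)%E.
    rewrite (hhE _ mC) -integral_cst //.
    apply: ge0_le_integral => //.
    all: try (by move=> y _; rewrite lee_fin hh_ge0).
    all: try (by move=> y Cy; rewrite lee_fin).
    all: try (by apply/measurable_realfun.measurable_EFinP; exact: measurable_funTS).
  have h3 : fine (nu' C) <= fine (mu' C) + δ + (1 - fine (nu (U δ))) := boundT _ _ (pre_meas mC) d0.
  have i2' : fine (mu' C) <= (1 - eps) * fine (nu' C).
    by rewrite -lee_fin EFinM -(pE nu' mC) -(pE mu' mC).
  nra.
have mVBC : measurable (V `|` B `|` C) by apply: measurableU => //; apply: measurableU.
have cov : 1 <= fine (nu' (V `|` B `|` C)).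
  rewrite -(pT nu'); apply: pmono => //.
  move=> y _; case: (ltP (`|hh y - 1|) eps) => [h|h]; first by left; left.
  move: h; rewrite ler_normr => /orP[h|h]; [left; right | right]; rewrite /B /C /=; lra.
have mVB : measurable (V `|` B) by apply: measurableU.
have u1 := pU nu' mVB mC.
have u2 := pU nu' mV mB.
exact: (fin_arith e0 hB hC cov u1 u2).
Qed.

Lemma measV eps : measurable [set y | `|hh y - 1| < eps].
Proof.
apply: meas_lt.
have := measurableT_comp (@measurable_realfun.normr_measurable R setT)
  (measurable_realfun.measurable_funB hh_meas (measurable_cst (1:R))).
by [].
Qed.

End core.


Theorem lemma11 (R : realType) (S S' : ptopologicalType)
  (polS : polish R S) (polS' : polish R S')
  (dO dO' : nat -> measure_display)
  (O : forall n, measurableType (dO n)) (O' : forall n, measurableType (dO' n))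
  (P : forall n, probability (O n) R) (Q : forall n, probability (O' n) R)
  (X : forall n, O n -> borel S) (Y : forall n, O' n -> borel S)
  (mX : forall n, measurable_fun setT (X n))
  (mY : forall n, measurable_fun setT (Y n))
  (g : nat -> S -> S') (cg : forall n, continuous (g n)) :
  ratio_to_one (fun n => law (P n) (X n)) (fun n => law (Q n) (Y n)) ->
  ratio_to_one
    (fun n => law (P n) (fun w => (g n (X n w) : borel S')))
    (fun n => law (Q n) (fun w => (g n (Y n w) : borel S'))).
Proof.
move=> [f [hfd hcv]].
pose mu n := distribution (P n) (@mkmf _ _ _ _ (X n) (mX n)).
pose nu n := distribution (Q n) (@mkmf _ _ _ _ (Y n) (mY n)).
pose G n := (g n : borel S -> borel S').
have mG : forall n, measurable_fun setT (G n) := fun n => @cont_borel _ _ _ (cg n).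
exists (fun n => @hh _ _ (borel S) (borel S') R (mu n) (nu n) (G n) (mG n)).
split.
  move=> n; exact: (@hh_dens _ _ (borel S) (borel S') R (mu n) (nu n) (f n) (hfd n) (G n) (mG n)).
move=> eps e0.
have mVn : forall n, measurable [set x | `|@hh _ _ (borel S) (borel S') R (mu n) (nu n) (G n) (mG n) x - 1| < eps].
  move=> n; exact: (@measV _ _ (borel S) (borel S') R (mu n) (nu n) (f n) (hfd n) (G n) (mG n) eps).
apply/fine_cvgP; split.
  apply: nearW => n.
  exact: (pfin (nu' (borel S) (borel S') R (nu n) (G n) (mG n)) (mVn n)).
apply/cvgrPdist_lt => η h0.
have d0 : 0 < eps * η / 8 by apply: divr_gt0 => //; apply: mulr_gt0.
have := hcv _ d0; move/fine_cvgP => [_ /cvgrPdist_lt /(_ _ d0) Hs].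
near=> n.
have Hb := @boundT' _ _ (borel S) (borel S') R (mu n) (nu n) (f n) (hfd n) (G n) (mG n) eps (eps * η / 8) e0 d0.
have Hv := p01 (nu' (borel S) (borel S') R (nu n) (G n) (mG n)) (mVn n).
apply: (fin_arith2 e0 h0 Hb _ (proj2 (andP Hv))).
near: n; apply: filterS Hs => m /=; exact.
Unshelve. all: by end_near.
Qed.
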